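(* Consider the algorithm described in the context, and suppose it does not terminate finitely. Then for every $k\in\mathbb{N}$, $$\|c_k\|_2-\|c_k+J_ks_k\|_2=\|c_k\|_2-\|c_k+J_kv_k\|_2\ge \frac{1}{2\kappa_c}\|J_k^Tc_k\|_2^2\min\Big\{\frac{1}{1+\kappa_{\nabla c}^2},\ \kappa_v\alpha_k\Big\}.$$
   Context: Problem: $\min_{x\in\mathbb{R}^n} f(x)+r(x)$ subject to $c(x)=0$, where $f:\mathbb{R}^n\to\mathbb{R}$ and $c:\mathbb{R}^n\to\mathbb{R}^m$ ($m\le n$) are continuously differentiable and $r:\mathbb{R}^n\to\mathbb{R}_{\ge 0}$ is convex. Write $g(x)=\nabla f(x)$, $J(x)=\nabla c(x)^T$, and $f_k=f(x_k)$, $g_k=g(x_k)$, $c_k=c(x_k)$, $J_k=J(x_k)$, $r_k=r(x_k)$. All norms are Euclidean (the matrix norm is the spectral norm). Merit function: $\Phi_\tau(x)=\tau(f(x)+r(x))+\|c(x)\|_2$. Algorithm: inputs $x_0$, $\alpha_0>0$, $\tau_{-1}>0$; constants $\kappa_v>0$, $\sigma_c,\epsilon_\tau,\xi,\eta\in(0,1)$, $\sigma_u\in(0,1/2]$, $\bar\sigma_u:=\sigma_u+\tfrac12$. For $k=0,1,\dots$: 1. If $J_k^Tc_k\ne0$, compute $v_k$ with $v_k\in\mathrm{Range}(J_k^T)$, $\|v_k\|_2\le\kappa_v\alpha_k\|J_k^Tc_k\|_2$, $\|c_k+J_kv_k\|_2\le\|c_k+J_kv_k^c\|_2$, where $v_k^c=-\beta_k^cJ_k^Tc_k$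 with $\beta_k^c$ minimizing $\tfrac12\|c_k-\beta J_kJ_k^Tc_k\|_2^2$ over $0\le\beta\le\kappa_v\alpha_k$. Otherwise set $v_k=0$, and if $c_k\ne0$ terminate. 2. Let $u_k$ be the unique minimizer of $g_k^Tu+\tfrac1{2\alpha_k}\|u\|_2^2+r(x_k+v_k+u)$ subject to $J_ku=0$; set $s_k=v_k+u_k$. If $s_k=0$, terminate. 3. Let $D_k:=g_k^Ts_k+\bar\sigma_u\|s_k\|_2^2/\alpha_k+r(x_k+s_k)-r_k$; $\tau_{k,\mathrm{trial}}=\infty$ if $D_k\le0$, else $\tau_{k,\mathrm{trial}}=(1-\sigma_c)(\|c_k\|_2-\|c_k+J_kv_k\|_2)/D_k$. Set $\tau_k=\tau_{k-1}$ if $\tau_{k-1}\le\tau_{k,\mathrm{trial}}$, else $\tau_k=\min\{(1-\epsilon_\tau)\tau_{k-1},\tau_{k,\mathrm{trial}}\}$. 4. With $\Delta q_k(s,\tau):=-\tau(g_k^Ts+\tfrac1{2\alpha_k}\|s\|_2^2+r(x_k+s)-r_k)+\|c_k\|_2-\|c_k+J_ks\|_2$: if $\Phi_{\tau_k}(x_k+s_k)\le\Phi_{\tau_k}(x_k)-\eta\Delta q_k(s_k,\tau_k)$ set $x_{k+1}=x_k+s_k$, $\alpha_{k+1}=\alpha_k$; else $x_{k+1}=x_k$, $\alpha_{k+1}=\xi\alpha_k$. Standing assumption: there is an open convex set $\mathcal X$ containing all iterates $x_k$ and trial points $x_k+s_k$ such that $f$ is bounded below on $\mathcal X$, $\nabla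 f$ is bounded and Lipschitz continuous on $\mathcal X$, $\|c(x)\|_2\le\kappa_c$ and $\|J(x)\|_2\le\kappa_{\nabla c}$ for all $x\in\mathcal X$ (constants $\kappa_c,\kappa_{\nabla c}>0$), $J$ is Lipschitz continuous on $\mathcal X$, and all subgradients of $r$ at points of $\mathcal X$ are uniformly bounded in norm. *)

(* Defs.v *)
From HB Require Import structures.
From mathcomp Require Import all_boot all_order all_algebra.
From mathcomp Require Import all_classical all_reals all_analysis.
Set Implicit Arguments. Unset Strict Implicit. Unset Printing Implicit Defensive.
Import Order.TTheory GRing.Theory Num.Theory.
Import numFieldNormedType.Exports.
Local Open Scope classical_set_scope.
Local Open Scope ring_scope.

Section Defs.
Variable R : realType.

Definition dotv {k : nat} (u v : 'cV[R]_k) : R := \sum_(i < k) u i 0 * v i 0.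
Definition norm2 {k : nat} (u : 'cV[R]_k) : R := Num.sqrt (dotv u u).

(* ||A||_2 <= a for the spectral norm ||A||_2 = sup_{d <> 0} ||A d||_2/||d||_2. *)
Definition specnorm_le {p q : nat} (A : 'M[R]_(p, q)) (a : R) : Prop :=
  forall d : 'cV[R]_q, norm2 (A *m d) <= a * norm2 d.

Variables (n m : nat).

Definition convex_set (X : set 'cV[R]_n) : Prop :=
  forall x y, X x -> X y -> forall t : R, 0 <= t <= 1 -> X (t *: x + (1 - t) *: y).
Definition convex_fun (r : 'cV[R]_n -> R) : Prop :=
  forall x y (t : R), 0 <= t <= 1 ->
    r (t *: x + (1 - t) *: y) <= t * r x + (1 - t) * r y.

Definition subgrad (r : 'cV[R]_n -> R) (x w : 'cV[R]_n) : Prop :=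
  forall y, r x + dotv w (y - x) <= r y.

Definition merit (f r : 'cV[R]_n -> R) (c : 'cV[R]_n -> 'cV[R]_m) (tau : R)
  (x : 'cV[R]_n) : R := tau * (f x + r x) + norm2 (c x).

Definition cauchy_obj (ck : 'cV[R]_m) (Jk : 'M[R]_(m, n)) (beta : R) : R :=
  2^-1 * norm2 (ck - beta *: (Jk *m Jk^T *m ck)) ^+ 2.

Definition step1_ok (kv ak : R) (ck : 'cV[R]_m) (Jk : 'M[R]_(m, n))
  (vk : 'cV[R]_n) : Prop :=
  if Jk^T *m ck != 0 then
    [/\ (exists w : 'cV[R]_m, vk = Jk^T *m w),
        norm2 vk <= kv * ak * norm2 (Jk^T *m ck) &
        exists betac : R,
          [/\ 0 <= betac <= kv * ak,
              (forall b : R, 0 <= b <= kv * ak ->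
                 cauchy_obj ck Jk betac <= cauchy_obj ck Jk b) &
              norm2 (ck + Jk *m vk)
                <= norm2 (ck + Jk *m (- (betac *: (Jk^T *m ck))))]]
  else vk = 0.

Definition step2_obj (r : 'cV[R]_n -> R) (gk xk vk : 'cV[R]_n) (ak : R)
  (u : 'cV[R]_n) : R :=
  dotv gk u + (2 * ak)^-1 * norm2 u ^+ 2 + r (xk + vk + u).

Definition step2_ok (r : 'cV[R]_n -> R) (gk xk vk : 'cV[R]_n) (ak : R)
  (Jk : 'M[R]_(m, n)) (uk : 'cV[R]_n) : Prop :=
  [/\ Jk *m uk = 0,
      (forall u, Jk *m u = 0 -> step2_obj r gk xk vk ak uk <= step2_obj r gk xk vk ak u) &
      (forall u, Jk *m u = 0 -> step2_obj r gk xk vk ak u <= step2_obj r gk xk vk ak uk ->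
         u = uk)].

(* Step 3: D_k and the merit parameter update (tau_trial = +oo when D_k <= 0) *)
Definition Dk (r : 'cV[R]_n -> R) (sigu : R) (gk xk sk : 'cV[R]_n) (ak : R) : R :=
  dotv gk sk + (sigu + 2^-1) * norm2 sk ^+ 2 / ak + r (xk + sk) - r xk.

Definition tau_update (sigc epst : R) (D : R) (ck : 'cV[R]_m) (Jk : 'M[R]_(m, n))
  (vk : 'cV[R]_n) (taup : R) : R :=
  if D <= 0 then taup
  else let trial := (1 - sigc) * (norm2 ck - norm2 (ck + Jk *m vk)) / D in
       if taup <= trial then taup else Num.min ((1 - epst) * taup) trial.

Definition dq (r : 'cV[R]_n -> R) (gk xk : 'cV[R]_n) (ak : R) (ck : 'cV[R]_m)
  (Jk : 'M[R]_(m, n)) (s : 'cV[R]_n) (tau : R) : R :=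
  - tau * (dotv gk s + (2 * ak)^-1 * norm2 s ^+ 2 + r (xk + s) - r xk)
  + norm2 ck - norm2 (ck + Jk *m s).

(* The full algorithm run, assuming it never terminates. Sequences:
   x k = x_k, a k = alpha_k, tau k = tau_k (tau_{-1} = taum1), v k, u k. *)
Definition algorithm_run (f r : 'cV[R]_n -> R) (g : 'cV[R]_n -> 'cV[R]_n)
  (c : 'cV[R]_n -> 'cV[R]_m) (J : 'cV[R]_n -> 'M[R]_(m, n))
  (kv sigc epst xi eta sigu taum1 : R)
  (x : nat -> 'cV[R]_n) (a : nat -> R) (tau : nat -> R)
  (v u : nat -> 'cV[R]_n) : Prop :=
  forall k : nat,
    let xk := x k in let ak := a k in
    let gk := g xk in let ck := c xk in let Jk := J xk in
    let sk := v k + u k in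
    let taup := if k is k'.+1 then tau k' else taum1 in
    (* step 1, and no termination in step 1 *)
    step1_ok kv ak ck Jk (v k) /\
    ~ (Jk^T *m ck = 0 /\ ck != 0) /\
    (* step 2, and no termination in step 2 *)
    step2_ok r gk xk (v k) ak Jk (u k) /\
    sk != 0 /\
    tau k = tau_update sigc epst (Dk r sigu gk xk sk ak) ck Jk (v k) taup /\
    (if merit f r c (tau k) (xk + sk)
             <= merit f r c (tau k) xk - eta * dq r gk xk ak ck Jk sk (tau k)
        then x k.+1 = xk + sk /\ a k.+1 = ak
        else x k.+1 = xk /\ a k.+1 = xi * ak).

Definition standing_assumption (f r : 'cV[R]_n -> R) (g : 'cV[R]_n -> 'cV[R]_n)
  (c : 'cV[R]_n -> 'cV[R]_m) (J : 'cV[R]_n -> 'M[R]_(m, n)) (kc kJ : R)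
  (x : nat -> 'cV[R]_n) (v u : nat -> 'cV[R]_n) : Prop :=
  exists X : set 'cV[R]_n,
    open X /\ convex_set X /\
    (forall k, X (x k) /\ X (x k + (v k + u k))) /\
    (exists lb : R, forall y, X y -> lb <= f y) /\
    (exists M : R, forall y, X y -> norm2 (g y) <= M) /\
    (exists L : R, forall y z, X y -> X z -> norm2 (g y - g z) <= L * norm2 (y - z)) /\
    (forall y, X y -> norm2 (c y) <= kc /\ specnorm_le (J y) kJ) /\
    (exists L : R, forall y z, X y -> X z -> specnorm_le (J y - J z) (L * norm2 (y - z))) /\
    (exists M : R, forall y w, X y -> subgrad r y w -> norm2 w <= M).

End Defs.

(* Main.v *)
Require Import Defs.
From HB Require Import structures.
From mathcomp Require Import all_boot all_order all_algebra.
From mathcomp Require Import all_classical all_reals all_analysis.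
From mathcomp Require Import ring lra.
Import Order.TTheory GRing.Theory Num.Theory.
Import numFieldNormedType.Exports.
Local Open Scope classical_set_scope.
Local Open Scope ring_scope.

Section H.
Context {R : realType}.

Lemma dotvE k (u w : 'cV[R]_k) : dotv u w = (u^T *m w) 0 0.
Proof. by rewrite /dotv !mxE; apply: eq_bigr => i _; rewrite mxE. Qed.

Lemma dotv_ge0 k (u : 'cV[R]_k) : 0 <= dotv u u.
Proof. by apply: sumr_ge0 => i _; rewrite -expr2 sqr_ge0. Qed.

Lemma norm2_sqr k (u : 'cV[R]_k) : norm2 u ^+ 2 = dotv u u.
Proof. by rewrite /norm2 sqr_sqrtr // dotv_ge0. Qed.

Lemma norm2_ge0 k (u : 'cV[R]_k) : 0 <= norm2 u.
Proof. by rewrite /norm2 sqrtr_ge0. Qed.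

Lemma norm2_0 k : norm2 (0 : 'cV[R]_k) = 0.
Proof. rewrite /norm2 /dotv big1 ?sqrtr0 // => i _; by rewrite mxE mul0r. Qed.

Lemma dotv_exp k (c y : 'cV[R]_k) (b : R) :
  dotv (c - b *: y) (c - b *: y) = dotv c c - 2 * b * dotv c y + b ^+ 2 * dotv y y.
Proof.
rewrite /dotv.
transitivity (\sum_(i < k) (c i 0 * c i 0 - 2 * b * (c i 0 * y i 0) + b ^+ 2 * (y i 0 * y i 0))).
  by apply: eq_bigr => i _; rewrite !mxE; ring.
by rewrite big_split /= sumrB -!mulr_sumr.
Qed.

Lemma dotv_mul p q (c : 'cV[R]_p) (A : 'M[R]_(p, q)) (w : 'cV[R]_q) :
  dotv c (A *m w) = dotv (A^T *m c) w.
Proof. by rewrite !dotvE trmx_mul trmxK mulmxA. Qed.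

End H.
Theorem lemma3p6 (R : realType) (n m : nat) (hmn : (m <= n)%N)
  (f r : 'cV[R]_n -> R) (g : 'cV[R]_n -> 'cV[R]_n)
  (c : 'cV[R]_n -> 'cV[R]_m) (J : 'cV[R]_n -> 'M[R]_(m, n))
  (* f, c continuously differentiable with gradient g and Jacobian J *)
  (hf : forall y, differentiable f y /\ forall d, 'd f y d = dotv (g y) d)
  (hg : continuous g)
  (hc : forall y, differentiable c y /\ forall d, 'd c y d = J y *m d)
  (hJ : continuous J)
  (* r : R^n -> R_{>=0} convex *)
  (hr0 : forall y, 0 <= r y) (hrc : convex_fun r)
  (* algorithm constants *)
  (kv sigc epst xi eta sigu taum1 kc kJ : R)
  (hkv : 0 < kv) (hsigc : 0 < sigc < 1) (hepst : 0 < epst < 1)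
  (hxi : 0 < xi < 1) (heta : 0 < eta < 1) (hsigu : 0 < sigu <= 2^-1)
  (htaum1 : 0 < taum1) (hkc : 0 < kc) (hkJ : 0 < kJ)
  (* iterates *)
  (x : nat -> 'cV[R]_n) (a : nat -> R) (tau : nat -> R) (v u : nat -> 'cV[R]_n)
  (ha0 : 0 < a 0%N)
  (hrun : algorithm_run f r g c J kv sigc epst xi eta sigu taum1 x a tau v u)
  (hsa : standing_assumption f r g c J kc kJ x v u) :
  forall k : nat,
    norm2 (c (x k)) - norm2 (c (x k) + J (x k) *m (v k + u k))
      = norm2 (c (x k)) - norm2 (c (x k) + J (x k) *m v k)
    /\ norm2 (c (x k)) - norm2 (c (x k) + J (x k) *m v k)
      >= (2 * kc)^-1 * norm2 ((J (x k))^T *m c (x k)) ^+ 2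
         * Num.min (1 + kJ ^+ 2)^-1 (kv * a k).
Proof.
move=> k.
have [h1 [hnt [[hJu _ _] _]]] := hrun k.
move: h1 hnt hJu => /=.
set c0 := c (x k); set Jk := J (x k); set w := Jk^T *m c0.
move=> h1 hnt hJu.
have [X [_ [_ [hX [_ [_ [_ [hXc _]]]]]]]] := hsa.
have [hc0 hJs] := hXc _ (proj1 (hX k)).
split; first by rewrite mulmxDr hJu addr0.
move: h1; rewrite /step1_ok -/w.
case: ifP => [/negbTE wn0 | /negbFE /eqP w0 ->].
  move=> [[w' hv] hvn [betac [/andP[hb0 hb1] hmin hbc]]].
  have hka : 0 <= kv * a k by apply: le_trans hb1.
  set b0 := Num.min (1 + kJ ^+ 2)^-1 (kv * a k).
  have hkJ2 : 0 < 1 + kJ ^+ 2 by rewrite ltr_pwDl // sqr_ge0.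
  have hb0pos : 0 <= b0 by rewrite /b0 le_min hka invr_ge0 ltW.
  have hb0le : b0 <= kv * a k by rewrite /b0 ge_min lexx orbT.
  have hb0le' : b0 * (1 + kJ ^+ 2) <= 1.
    have h2 : b0 <= (1 + kJ ^+ 2)^-1 by rewrite /b0 ge_min lexx.
    have := ler_wpM2r (ltW hkJ2) h2.
    by rewrite mulVf // gt_eqF.
  have := hmin b0; rewrite hb0pos hb0le => /(_ isT).
  rewrite /cauchy_obj !norm2_sqr -mulmxA -/w !dotv_exp dotv_mul -/w => hcau.
  move: hbc; rewrite mulmxN -scalemxAr -/w => hbc.
  have hJw := hJs w; rewrite -/Jk in hJw; rewrite -/c0 in hc0.
  set s := norm2 (c0 + Jk *m v k) in hbc *.
  set p := norm2 (c0 + - (betac *: (Jk *m w))) in hbc.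
  have hp2 : p ^+ 2 = dotv c0 c0 - 2 * betac * dotv w w + betac ^+ 2 * dotv (Jk *m w) (Jk *m w).
    by rewrite /p norm2_sqr dotv_exp dotv_mul -/w.
  have hs0 : 0 <= s by apply: norm2_ge0.
  have ht0 : 0 <= norm2 c0 by apply: norm2_ge0.
  have ht2 := norm2_sqr _ c0.
  have hw2 := norm2_sqr _ w.
  have hq2 := norm2_sqr _ (Jk *m w).
  have hw0 : 0 <= norm2 w by apply: norm2_ge0.
  have hq0 : 0 <= norm2 (Jk *m w) by apply: norm2_ge0.
  set t := norm2 c0 in ht0 ht2 hc0 *.
  set W := dotv w w in hw2 hcau hp2 *.
  set Q := dotv (Jk *m w) (Jk *m w) in hq2 hcau hp2.
  set N := dotv c0 c0 in ht2 hcau hp2.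
  have hQ : Q <= kJ ^+ 2 * W.
    by rewrite -hq2 -hw2 -exprMn !expr2; apply: ler_pM.
  have hA : b0 * Q <= W.
    have hW0 : 0 <= W by rewrite -hw2 sqr_ge0.
    have e1 : b0 * kJ ^+ 2 <= 1 by move: hb0le'; rewrite mulrDr mulr1; lra.
    have e2 : b0 * Q <= b0 * (kJ ^+ 2 * W) by rewrite ler_wpM2l.
    have e3 : b0 * kJ ^+ 2 * W <= W by rewrite -[leRHS]mul1r ler_wpM2r.
    by rewrite mulrA in e2; apply: le_trans e3.
  have hB : s ^+ 2 <= N - b0 * W.
    have e1 : s ^+ 2 <= p ^+ 2 by rewrite !expr2; apply: ler_pM.
    have e2 : b0 * (b0 * Q) <= b0 * W by rewrite ler_wpM2l.
    move: e2; rewrite mulrA -expr2 => e2.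
    lra.
  have hW0 : 0 <= W by rewrite -hw2 sqr_ge0.
  have hD : 0 <= b0 * W by rewrite mulr_ge0.
  have hst2 : s ^+ 2 <= t ^+ 2 by lra.
  have hst : s <= t.
    by move: hst2; rewrite ler_pXn2r // nnegrE.
  have e1 : b0 * W <= (t - s) * (t + s).
    have -> : (t - s) * (t + s) = t ^+ 2 - s ^+ 2 by ring.
    lra.
  have e2 : (t - s) * (t + s) <= (t - s) * (2 * kc).
    rewrite ler_wpM2l ?subr_ge0 //; lra.
  have hfin : W * b0 <= 2 * kc * (t - s).
    rewrite mulrC [X in _ <= X]mulrC; exact: le_trans e1 e2.
  rewrite ?hw2 -mulrA ler_pdivrMl ?mulr_gt0 //.
have c00 : c0 = 0.
  by apply/eqP; apply: contraT => cn; exfalso; apply: hnt; split.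
by rewrite w0 c00 mulmx0 addr0 !norm2_0 expr0n /= mulr0 mul0r subrr lexx.
Qed.
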